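(* Let $\mu$ be a complex measure on the Borel $\sigma$-algebra of $[0,1)$, and let $|\mu|$ be its total variation measure. Assume that for some real $\sigma\ge 0$ the following Hölder condition at $1$ holds: $$(H_\sigma)\qquad \exists K<\infty\ \ \forall x\in[0,1):\quad |\mu|\bigl([x,1)\bigr)\le K(1-x)^\sigma .$$ For real $m\ge 0$ let $u_m=\int_{[0,1)}x^m\,\mu(dx)$ (with $0^0=1$), and for real $t$ let $E(t)=\int_{[0,1)}e^{tx}\,\mu(dx)$. Then, as the real variable $m\to+\infty$, $$u_m=e^{-m}E(m)+O\!\left(\frac{1}{m^{1+\sigma}}\right).$$ *)

(* Defs.v *)
From HB Require Import structures.
From mathcomp Require Import all_boot all_order all_algebra.
From mathcomp Require Import all_classical all_reals all_analysis.
From mathcomp Require Import complex.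
Set Implicit Arguments. Unset Strict Implicit. Unset Printing Implicit Defensive.
Import Order.TTheory GRing.Theory Num.Theory.
Import numFieldNormedType.Exports.
Local Open Scope classical_set_scope.
Local Open Scope ring_scope.

(* A complex measure on the Borel sets of [0,1) is represented by four finite
   (positive) Borel measures mu1..mu4 on R, via
     mu(A) = (mu1 - mu2)(A ∩ [0,1)) + i (mu3 - mu4)(A ∩ [0,1)).
   Every complex measure on [0,1) arises this way (Jordan decomposition of
   its real and imaginary parts) and conversely. *)

Definition I01 {R : realType} : set R := `[0%R, 1%R[.

Section ComplexMeasure.
Context {R : realType}.
Variables mu1 mu2 mu3 mu4 : {finite_measure set R -> \bar R}.

Definition cmeas (A : set R) : R[i] :=
  Complex (fine (mu1 (A `&` I01)) - fine (mu2 (A `&` I01)))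
          (fine (mu3 (A `&` I01)) - fine (mu4 (A `&` I01))).

Definition cm_integral (f : R -> R) : R[i] :=
  Complex (Rintegral mu1 I01 f - Rintegral mu2 I01 f)
          (Rintegral mu3 I01 f - Rintegral mu4 I01 f).

Definition cm_variation (A : set R) : \bar R :=
  ereal_sup [set (\sum_(0 <= n <oo) ((ComplexField.Normc.normc (cmeas (B n)))%:E))%E
            | B in [set B : nat -> set R |
                     (forall n, measurable (B n)) /\
                     trivIset setT B /\
                     \bigcup_n B n = A]].

End ComplexMeasure.

(* Main.v *)
Require Import Defs.
From HB Require Import structures.
From mathcomp Require Import all_boot all_order all_algebra.
From mathcomp Require Import all_classical all_reals all_analysis.
From mathcomp Require Import complex.
From mathcomp Require Import measurable_realfun.
From mathcomp Require Import lra ring.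
Import Order.TTheory GRing.Theory Num.Theory.
Import numFieldNormedType.Exports.
Local Open Scope classical_set_scope.
Local Open Scope ring_scope.
Lemma g_bounds (R : realType) (m x : R) : 1 <= m -> 0 <= x < 1 ->
  0 <= expR (m * (x - 1)) - x `^ m <=
  4 * m * (1 - x) ^+ 2 * expR (- (m * (1 - x))).
Proof.
move=> m1 /andP[x0 x1].
have EE : expR (- (m * (1 - x))) = expR (m * (x - 1)) by congr expR; ring.
rewrite EE; set E := expR (m * (x - 1)).
have E0 : 0 <= E by exact: expR_ge0.
have [->|xn0] := eqVneq x 0.
  rewrite powR0; last by rewrite gt_eqF // (lt_le_trans ltr01).
  rewrite subr0 E0 /=; rewrite subr0 expr1n mulr1.
  have : 1 <= 4 * m by lra.
  move=> h; rewrite -[X in X <= _]mul1r; exact: ler_wpM2r.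
have xp : 0 < x by rewrite lt_neqAle eq_sym xn0.
rewrite /powR (negbTE xn0).
set L := ln x.
have L1 : L <= x - 1.
  have := @le_ln1Dx R (x - 1); rewrite (_ : 1 + (x - 1) = x); last by ring.
  by apply; lra.
have L2 : - L <= x^-1 - 1.
  have := @le_ln1Dx R (x^-1 - 1); rewrite (_ : 1 + (x^-1 - 1) = x^-1); last by ring.
  rewrite lnV ?posrE //; apply.
  have : 0 < x^-1 by rewrite invr_gt0.
  lra.
have F1 : expR (m * L) <= E by rewrite ler_expR; apply: ler_wpM2l; lra.
apply/andP; split; first lra.
have F2 : E - expR (m * L) <= E * (m * (x - 1 - L)).
  have -> : expR (m * L) = E * expR (m * L - m * (x - 1)).
    by rewrite -expRD; congr expR; ring.
  have := expR_ge1Dx (m * L - m * (x - 1)).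
  move=> h.
  have -> : E - E * expR (m * L - m * (x - 1)) = E * (1 - expR (m * L - m * (x - 1))) by ring.
  apply: ler_wpM2l => //; lra.
have [xh|xh] := leP (2^-1) x.
  apply: (le_trans F2).
  rewrite [X in _ <= X]mulrC -mulrA; apply: ler_wpM2l => //.
  rewrite mulrA [_ * m]mulrC -mulrA; apply: ler_wpM2l; first lra.
  have xi : x^-1 <= 2.
    rewrite -[2](invrK (2:R)); rewrite lef_pV2 ?posrE //; lra.
  have -> : 4 * (1 - x) ^+ 2 = (1 - x) ^+ 2 * 4 by ring.
  have h : x - 1 - L <= (1 - x) ^+ 2 * x^-1.
    have -> : (1 - x) ^+ 2 * x^-1 = x - 2 + x^-1.
      by field; rewrite gt_eqF.
    lra.
  apply: (le_trans h); apply: ler_wpM2l; first by rewrite sqr_ge0.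
  lra.
have h1 : 1 <= 4 * m * (1 - x) ^+ 2.
  have : 2^-1 < 1 - x by lra.
  move=> h.
  have h2 : (2^-1) ^+ 2 <= (1 - x) ^+ 2.
    by rewrite ler_sqr ?nnegrE; lra.
  have e4 : (2^-1 : R) ^+ 2 = 4^-1.
    by rewrite expr2 -invfM; congr (_^-1); ring.
  rewrite e4 in h2.
  have h4 : 4 * 4^-1 = 1 :> R by rewrite mulfV.
  nra.
have : E - expR (m * L) <= E by have := expR_ge0 (m * L); lra.
move=> h; apply: (le_trans h).
rewrite -[X in X <= _]mul1r; apply: ler_wpM2r => //.
Qed.

Local Open Scope ereal_scope.
Lemma mg (R : realType) (m : R) (D : set R) :
  measurable_fun D (fun x : R => (expR (m * (x - 1)) - x `^ m)%R).
Proof.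
apply: measurable_funB.
  apply: measurableT_comp => //; apply: measurable_funM => //.
  exact: measurable_funB.
apply: measurable_funS (measurable_powR m) => //.
Qed.

Lemma ind_meas (R : realType) (D A : set R) (c : R) : measurable A ->
  measurable_fun D (fun x : R => (c * \1_A x)%:E).
Proof.
move=> mA; apply: measurableT_comp => //; apply: measurable_funM => //.
Qed.

Lemma geo_bound (R : realType) (c q : R) : (0 <= c)%R -> (0 < q)%R -> (q < 1)%R ->
  \sum_(0 <= k <oo) (c * q ^+ k)%:E <= (c * (1 - q)^-1)%:E.
Proof.
move=> c0 q0 q1.
apply: lime_le.
  apply: is_cvg_nneseries => n _ _; rewrite lee_fin mulr_ge0 // exprn_ge0 //; lra.
apply: nearW => n.
rewrite sumEFin lee_fin.
have := geometric_le_lim n c0 q0.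
rewrite ger0_norm; last lra.
move=> /(_ q1); apply: le_trans; rewrite le_eqVlt; apply/orP; left; apply/eqP.
by rewrite /series /= big_mkord.
Qed.

Lemma pow_exp_bound (R : realType) (y a : R) : (0 <= y)%R -> (0 < a)%R ->
  (y `^ a <= (2 * a) `^ a * expR (y / 2))%R.
Proof.
move=> y0 a0.
have a2 : (0 < 2 * a)%R by lra.
have -> : y = (2 * a * (y / (2 * a)))%R by field; rewrite gt_eqF.
rewrite powRM; [|lra|by apply: divr_ge0; lra].
apply: ler_wpM2l; first exact: powR_ge0.
have h : (y / (2 * a) <= expR (y / (2 * a)))%R.
  by have := expR_ge1Dx (y / (2 * a)); lra.
apply: (le_trans (ge0_ler_powR (ltW a0) _ _ h)).
- by rewrite nnegrE; apply: divr_ge0; lra.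
- by rewrite nnegrE expR_ge0.
rewrite -expRM le_eqVlt; apply/orP; left; apply/eqP; congr expR.
by field; rewrite gt_eqF.
Qed.

Lemma powR_divE (R : realType) (n m s : R) : (0 < n)%R -> (0 < m)%R ->
  ((n / m) `^ s = n `^ s / m `^ s)%R.
Proof.
move=> n0 m0; rewrite powRM; [|lra|by rewrite invr_ge0; lra].
congr (_ * _)%R.
rewrite -powR_inv1; last lra.
by rewrite -powRrM mulN1r powRN.
Qed.

Lemma term_bound (R : realType) (sigma K m : R) (k : nat) :
  (0 <= sigma)%R -> (0 <= K)%R -> (1 <= m)%R ->
  (4 / m * (k.+1%:R) ^+ 2 * expR (- k%:R) * (K * (k.+1%:R / m) `^ sigma) <=
   (4 * K * ((2 * (2 + sigma)) `^ (2 + sigma) * expR (2^-1)) / m `^ (1 + sigma))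
   * expR (- 2^-1) ^+ k)%R.
Proof.
move=> s0 K0 m1.
have m0 : (0 < m)%R by lra.
set n : R := k.+1%:R.
have n0 : (0 < n)%R by rewrite /n ltr0n.
rewrite powR_divE //.
have mE : (m `^ (1 + sigma) = m * m `^ sigma)%R.
  by rewrite powRD ?powRr1 //; [lra|apply/implyP => _; rewrite gt_eqF].
have nE : (n `^ (2 + sigma) = n ^+ 2 * n `^ sigma)%R.
  rewrite powRD; last by apply/implyP => _; rewrite gt_eqF.
  by rewrite powR_mulrn //; lra.
have ms0 : (0 < m `^ sigma)%R by apply: powR_gt0.
have ns0 : (0 <= n `^ sigma)%R by apply: powR_ge0.
have key : (n `^ (2 + sigma) * expR (- k%:R) <=
    (2 * (2 + sigma)) `^ (2 + sigma) * expR (2^-1) * expR (- 2^-1) ^+ k)%R.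
  have := @pow_exp_bound R n (2 + sigma)%R (ltW n0).
  move=> /(_ ltac:(lra)) h.
  have -> : ((2 * (2 + sigma)) `^ (2 + sigma) * expR (2^-1) * expR (- 2^-1) ^+ k
     = (2 * (2 + sigma)) `^ (2 + sigma) * expR (n / 2) * expR (- k%:R))%R.
    rewrite -expRM_natl -!mulrA -!expRD; congr (_ * expR _)%R.
    by rewrite /n -addn1 natrD; field.
  by apply: ler_wpM2r => //; exact: expR_ge0.
rewrite mE.
have -> : (4 / m * n ^+ 2 * expR (- k%:R) * (K * (n `^ sigma / m `^ sigma))
   = 4 * K / (m * m `^ sigma) * (n `^ (2 + sigma) * expR (- k%:R)))%R.
  by rewrite nE; field; apply/andP; split; rewrite gt_eqF.
have -> : (4 * K * ((2 * (2 + sigma)) `^ (2 + sigma) * expR (2^-1)) / (m * m `^ sigma)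
   * expR (- 2^-1) ^+ k
   = 4 * K / (m * m `^ sigma) * ((2 * (2 + sigma)) `^ (2 + sigma) * expR (2^-1)
   * expR (- 2^-1) ^+ k))%R by ring.
apply: ler_wpM2l => //.
apply: divr_ge0; first lra.
by apply: mulr_ge0; lra.
Qed.

Definition CA {R : realType} (sigma K : R) : R :=
  (4 * K * ((2 * (2 + sigma)) `^ (2 + sigma) * expR (2^-1)) * (1 - expR (- 2^-1))^-1)%R.

Lemma set_inter (R : realType) (a : R) : (a <= 1)%R ->
  `[a, 1%R[%classic `&` I01 = `[Num.max a 0%R, 1%R[%classic.
Proof.
move=> a1; rewrite /I01; apply/seteqP; split => y /=; rewrite !in_itv /=.
  move=> [] /andP[ay y1] /andP[y0 _]; by rewrite ge_max ay y0 y1.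
rewrite ge_max => /andP[/andP[ay y0] y1]; split; by rewrite ?ay ?y0 y1.
Qed.

Lemma meas_S (R : realType) (lam : {measure set R -> \bar R}) (sigma K m : R) (k : nat) :
  (0 <= sigma)%R -> (1 <= m)%R ->
  (forall x : R, (0 <= x < 1)%R -> lam `[x, 1%R[%classic <= (K * (1 - x) `^ sigma)%:E) ->
  lam (`[(1 - k.+1%:R / m)%R, 1%R[%classic `&` I01) <= (K * (k.+1%:R / m) `^ sigma)%:E.
Proof.
move=> s0 m1 H.
have m0 : (0 < m)%R by lra.
have q0 : (0 < k.+1%:R / m)%R by apply: divr_gt0; [rewrite ltr0n|lra].
have K0 : (0 <= K)%R.
  have := H 0%R; rewrite lexx ltr01 => /(_ isT).
  rewrite subr0 powR1 mulr1 => h; rewrite -lee_fin; exact: le_trans h.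
rewrite set_inter; last lra.
have [a0|a0] := leP 0%R (1 - k.+1%:R / m)%R.
  have -> : (K * (k.+1%:R / m) `^ sigma = K * (1 - (1 - k.+1%:R / m)) `^ sigma)%R.
    by congr (_ * _ `^ _)%R; ring.
  by apply: H; rewrite a0 /=; lra.

apply: (le_trans (H 0%R _)); first by rewrite lexx ltr01.
rewrite lee_fin subr0 powR1 /=; apply: ler_wpM2l => //.
have := @ler_powR R (k.+1%:R / m)%R _ 0%R sigma s0; rewrite powRr0; apply; lra.
Qed.

Lemma pointwise (R : realType) (m x : R) : (1 <= m)%R -> (0 <= x < 1)%R ->
  (expR (m * (x - 1)) - x `^ m)%:E <=
  \sum_(0 <= k <oo) ((4 / m * (k.+1%:R) ^+ 2 * expR (- k%:R)) *
                     \1_(`[(1 - k.+1%:R / m)%R, 1%R[%classic) x)%:E.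
Proof.
move=> m1 /andP[x0 x1].
have m0 : (0 < m)%R by lra.
set u := (m * (1 - x))%R.
have u0 : (0 <= u)%R by apply: mulr_ge0; lra.
set k0 := Num.trunc u.
have /andP[lo hi] := truncn_itv u0; rewrite -/k0 in lo hi.
have w0 : forall k : nat, (0 <= 4 / m * (k.+1%:R) ^+ 2 * expR (- k%:R))%R.
  move=> k; apply: mulr_ge0; last exact: expR_ge0.
  apply: mulr_ge0; last exact: sqr_ge0.
  by apply: divr_ge0; lra.
have t0 : forall k : nat, (0%R <= ((4 / m * (k.+1%:R) ^+ 2 * expR (- k%:R)) *
                     \1_(`[(1 - k.+1%:R / m)%R, 1%R[%classic) x)%:E).
  by move=> k; rewrite lee_fin; apply: mulr_ge0 => //; exact: indic_ge0.
apply: le_trans (nneseries_lim_ge k0.+1 (fun n _ _ => t0 n)).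
rewrite big_nat_recr //=.
apply: le_trans (leeDr _ _); last by apply: sume_ge0 => n _; exact: t0.
rewrite indicE mem_set; last first.
  rewrite /= in_itv /= x1 andbT.
  have : (u < k0.+1%:R)%R by [].
  rewrite /u => h.
  have : (m * (1 - x) / m < k0.+1%:R / m)%R by rewrite ltr_pM2r // invr_gt0.
  rewrite mulrAC mulfV ?gt_eqF // mul1r; lra.
rewrite mulr1 lee_fin.
have /andP[_ g1] := @g_bounds R m x m1 (ltac:(apply/andP; split => //) : (0 <= x < 1)%R).
apply: (le_trans g1).
have -> : (4 * m * (1 - x) ^+ 2 * expR (- (m * (1 - x))) = 4 / m * u ^+ 2 * expR (- u))%R.
  by rewrite /u; field; rewrite gt_eqF.
apply: ler_pM.
- apply: mulr_ge0; [apply: divr_ge0; lra|exact: sqr_ge0].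
- exact: expR_ge0.
- apply: ler_wpM2l; first by apply: divr_ge0; lra.
  by rewrite ler_sqr ?nnegrE; [lra|exact: u0|rewrite ler0n].
- by rewrite ler_expR lerN2.
Qed.

Lemma lemA (R : realType) (lam : {measure set R -> \bar R}) (sigma K m : R) :
  (0 <= sigma)%R -> (1 <= m)%R ->
  (forall x : R, (0 <= x < 1)%R -> lam `[x, 1%R[%classic <= (K * (1 - x) `^ sigma)%:E) ->
  \int[lam]_(x in I01) (expR (m * (x - 1)) - x `^ m)%:E <= (CA sigma K / m `^ (1 + sigma))%:E.
Proof.
move=> s0 m1 H.
have m0 : (0 < m)%R by lra.
have K0 : (0 <= K)%R.
  have := H 0%R; rewrite lexx ltr01 => /(_ isT).
  rewrite subr0 powR1 mulr1 => h; rewrite -lee_fin; exact: le_trans h.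
have mI : measurable (I01 : set R) by exact: measurable_itv.
have w0 : forall k : nat, (0 <= 4 / m * (k.+1%:R) ^+ 2 * expR (- k%:R))%R.
  move=> k; apply: mulr_ge0; last exact: expR_ge0.
  apply: mulr_ge0; last exact: sqr_ge0.
  by apply: divr_ge0; lra.
have t0 : forall k (x : R), (0%R <= ((4 / m * (k.+1%:R) ^+ 2 * expR (- k%:R)) *
                     \1_(`[(1 - k.+1%:R / m)%R, 1%R[%classic) x)%:E).
  by move=> k x; rewrite lee_fin; apply: mulr_ge0 => //; exact: indic_ge0.
have mS : forall k : nat, measurable (`[(1 - k.+1%:R / m)%R, 1%R[%classic : set R).
  by move=> k; exact: measurable_itv.
apply: le_trans.
  apply: (ge0_le_integral lam mI (f2 := fun x => \sum_(0 <= k <oo)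
     ((4 / m * (k.+1%:R) ^+ 2 * expR (- k%:R)) *
                     \1_(`[(1 - k.+1%:R / m)%R, 1%R[%classic) x)%:E)).
  - move=> x; rewrite /I01 /= in_itv /= => Ix.
    by have /andP[g0 _] := @g_bounds R m x m1 Ix; rewrite lee_fin.
  - by apply: measurableT_comp => //; exact: mg.
  - apply: (@ge0_emeasurable_sum _ _ _ _ _ predT) => //.
    by move=> k _; exact: ind_meas.
  - move=> x; rewrite /I01 /= in_itv /= => Ix.
    exact: pointwise.
rewrite integral_nneseries //; last by move=> k; exact: ind_meas.
set A := ((2 * (2 + sigma)) `^ (2 + sigma) * expR (2^-1))%R.
set c := (4 * K * A / m `^ (1 + sigma))%R.
set q := expR (- 2^-1 : R).
have q0 : (0 < q)%R by exact: expR_gt0.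
have q1 : (q < 1)%R by rewrite /q expR_lt1; lra.
have c0 : (0 <= c)%R.
  apply: divr_ge0; last exact: powR_ge0.
  apply: mulr_ge0; first lra.
  by apply: mulr_ge0; [exact: powR_ge0|exact: expR_ge0].
apply: le_trans (_ : \sum_(0 <= k <oo) (c * q ^+ k)%:E <= _).
  apply: lee_nneseries.
    by move=> k _ _; apply: integral_ge0 => x _; exact: t0.
  move=> k _.
  rewrite (@integralZl_indic _ _ _ lam _ mI (fun=> `[(1 - k.+1%:R / m)%R, 1%R[%classic)) //; last by move=> /(lt_le_trans) /(_ (w0 k)); rewrite ltxx.
  rewrite integral_indic //.
  apply: le_trans.
    apply: lee_wpmul2l; first by rewrite lee_fin.
    exact: (@meas_S R lam sigma K m k s0 m1 H).
  rewrite -EFinM lee_fin.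
  exact: term_bound.
apply: (le_trans (@geo_bound R c q c0 q0 q1)).
rewrite lee_fin le_eqVlt; apply/orP; left; apply/eqP.
rewrite /c /CA -/A; ring.
Qed.

Lemma int_bnd (R : realType) (mu : {finite_measure set R -> \bar R}) (f : R -> R) (M : R) :
  measurable_fun I01 f -> (forall x, I01 x -> (`|f x| <= M)%R) ->
  mu.-integrable I01 (EFin \o f).
Proof.
move=> mf fM.
have mI : measurable (I01 : set R) by exact: measurable_itv.
apply: measurable_bounded_integrable => //.
  by have := @fin_num_measure _ _ _ mu _ mI; rewrite fin_numElt => /andP[_ ->].
exists M; split; first exact: num_real.
move=> M' MM' x Ix; apply: (le_trans (fM x Ix)); exact: ltW.
Qed.

Lemma g_abs (R : realType) (m x : R) : (1 <= m)%R -> I01 x ->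
  (`|expR (m * (x - 1)) - x `^ m| <= 1)%R.
Proof.
move=> m1; rewrite /I01 /= in_itv /= => Ix.
have /andP[g0 _] := @g_bounds R m x m1 Ix.
rewrite ger0_norm //.
have := powR_ge0 x m.
have : (expR (m * (x - 1)) <= 1)%R.
  by rewrite expR_le1; apply: mulr_ge0_le0; [lra|move: Ix => /andP[_ ?]; lra].
lra.
Qed.

Lemma lemB0 (R : realType) (ma mb : {finite_measure set R -> \bar R})
  (nu : {charge set R -> \bar R}) (sigma K m : R) :
  (forall A, measurable A -> nu A = ma A - mb A) ->
  (0 <= sigma)%R -> (1 <= m)%R ->
  (forall x : R, (0 <= x < 1)%R -> forall B : set R, measurable B ->
      B `<=` `[x, 1%R[%classic ->
      (`|fine (ma B) - fine (mb B)| <= K * (1 - x) `^ sigma)%R) ->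
  (`|Rintegral ma I01 (fun x => expR (m * (x - 1)) - x `^ m) -
     Rintegral mb I01 (fun x => expR (m * (x - 1)) - x `^ m)| <=
   CA sigma K / m `^ (1 + sigma))%R.
Proof.
move=> nuE s0 m1 H.
set g := (fun x : R => expR (m * (x - 1)) - x `^ m)%R.
have mI : measurable (I01 : set R) by exact: measurable_itv.
have [P [N PN]] := Hahn_decomposition nu.
have [_ _ _ _] := PN.
have mP : measurable P by case: PN => -[].
have mN : measurable N by case: PN => _ [].
set JP := jordan_pos PN.
set JN := jordan_neg PN.
have fin (mu : {finite_measure set R -> \bar R}) A : measurable A -> mu A = (fine (mu A))%:E.
  by move=> mA; rewrite fineK // fin_num_measure.
have HP : forall x, (0 <= x < 1)%R -> JP `[x, 1%R[%classic <= (K * (1 - x) `^ sigma)%:E.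
  move=> x Ix; rewrite /JP jordan_posE cjordan_posE /crestr0 mem_set; last exact: measurable_itv.
  have mB : measurable (`[x, 1%R[%classic `&` P) by apply: measurableI => //; exact: measurable_itv.
  rewrite /crestr nuE // (fin ma) // (fin mb) //.
  rewrite -EFinB lee_fin; apply: le_trans (H x Ix _ mB _); first exact: ler_norm.
  exact: subIsetl.
have HN : forall x, (0 <= x < 1)%R -> JN `[x, 1%R[%classic <= (K * (1 - x) `^ sigma)%:E.
  move=> x Ix; rewrite /JN jordan_negE cjordan_negE /crestr0 mem_set; last exact: measurable_itv.
  have mB : measurable (`[x, 1%R[%classic `&` N) by apply: measurableI => //; exact: measurable_itv.
  rewrite /crestr nuE // (fin ma) // (fin mb) //.
  rewrite -EFinB -EFinN lee_fin; apply: le_trans (H x Ix _ mB _).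
    by rewrite -normrN; exact: ler_norm.
  exact: subIsetl.
have bP := @lemA R JP sigma K m s0 m1 HP.
have bN := @lemA R JN sigma K m s0 m1 HN.
have mg' : measurable_fun I01 (EFin \o g) by apply: measurableT_comp => //; exact: mg.
have g0 : forall x, I01 x -> 0 <= (EFin \o g) x.
  move=> x; rewrite /I01 /= in_itv /= => Ix.
  by have /andP[? _] := @g_bounds R m x m1 Ix; rewrite lee_fin.
have ig (mu : {finite_measure set R -> \bar R}) : mu.-integrable I01 (EFin \o g).
  apply: (@int_bnd R mu g 1) => //; first exact: mg.
  by move=> x Ix; exact: g_abs.
have key : \int[ma]_(x in I01) (EFin \o g) x + \int[JN]_(x in I01) (EFin \o g) x =
           \int[mb]_(x in I01) (EFin \o g) x + \int[JP]_(x in I01) (EFin \o g) x.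
  rewrite -!ge0_integral_measure_add //.
  apply: eq_measure_integral => A mA _.
  transitivity (ma A + JN A); first exact: (measure_addE ma JN A).
  transitivity (mb A + JP A); last exact: esym (measure_addE mb JP A).
  have := jordan_decomp PN mA.
  rewrite nuE // /cadd /= /cscale /= mulN1e.
  rewrite (fin ma A mA) (fin mb A mA) (fin JP A mA) (fin JN A mA).
  move=> hh.
  rewrite -[X in _ + X = _]fineK ?fin_num_measure // -[X in _ = _ + X]fineK ?fin_num_measure //.
  move: hh; rewrite -!EFinN -!EFinD => -[hh].
  by apply: f_equal; lra.
rewrite /Rintegral.
move: key.
have := integrable_fin_num mI (ig ma).
have := integrable_fin_num mI (ig mb).
have := integrable_fin_num mI (ig JP).
have := integrable_fin_num mI (ig JN).
have i0P := integral_ge0 JP g0.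
have i0N := integral_ge0 JN g0.
move: bP bN i0P i0N.
rewrite -/g.
have -> : (fun x => (g x)%:E) = EFin \o g by [].
case: (\int[ma]_(x in I01) (EFin \o g) x) => [a| |] //.
case: (\int[mb]_(x in I01) (EFin \o g) x) => [b| |] //.
case: (\int[JP]_(x in I01) (EFin \o g) x) => [p| |] //.
case: (\int[JN]_(x in I01) (EFin \o g) x) => [n| |] //.
rewrite !lee_fin /= => bP bN i0P i0N _ _ _ _ -[h].
rewrite ler_norml; apply/andP; split; lra.
Qed.

Lemma re_le_normc (R : rcfType) (a b : R) :
  (`|a| <= ComplexField.Normc.normc (Complex a b))%R.
Proof.
rewrite /= -sqrtr_sqr; apply: ler_wsqrtr.
by rewrite lerDl sqr_ge0.
Qed.

Lemma im_le_normc (R : rcfType) (a b : R) :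
  (`|b| <= ComplexField.Normc.normc (Complex a b))%R.
Proof.
rewrite /= -sqrtr_sqr; apply: ler_wsqrtr.
by rewrite lerDr sqr_ge0.
Qed.

Lemma normc_le (R : rcfType) (a b : R) :
  (ComplexField.Normc.normc (Complex a b) <= `|a| + `|b|)%R.
Proof.
rewrite /=.
have h : (0 <= `|a| + `|b|)%R by rewrite addr_ge0.
apply: (@le_trans _ _ (Num.sqrt ((`|a| + `|b|) ^+ 2))); last by rewrite sqrtr_sqr ger0_norm.
apply: ler_wsqrtr.
rewrite -[(a ^+ 2)%R]real_normK ?num_real // -[(b ^+ 2)%R]real_normK ?num_real //.
have := normr_ge0 a; have := normr_ge0 b; nra.
Qed.

Lemma var_ge (R : realType) (mu1 mu2 mu3 mu4 : {finite_measure set R -> \bar R})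
  (x : R) (B : set R) : measurable B -> B `<=` `[x, 1%R[%classic ->
  (ComplexField.Normc.normc (cmeas mu1 mu2 mu3 mu4 B))%:E <=
  cm_variation mu1 mu2 mu3 mu4 `[x, 1%R[%classic.
Proof.
move=> mB BA.
apply: ereal_sup_ge.
exists (\sum_(0 <= n <oo)
  (ComplexField.Normc.normc (cmeas mu1 mu2 mu3 mu4 (bigcup2 B (`[x, 1%R[%classic `\` B) n)))%:E).
  exists (bigcup2 B (`[x, 1%R[%classic `\` B)) => //.
  split; [|split].
  - move=> [|[|n]] /=; first exact: mB.
      by apply: measurableD => //; exact: measurable_itv.
    exact: measurable0.
  - rewrite -trivIset_bigcup2; apply/seteqP; split => // y [By []] //.
  - by rewrite bigcup2E; apply/seteqP; split => y; [case => //; [exact: BA|case]|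
      move=> Ay; have [By|nBy] := pselect (B y); [left|right]].
apply: le_trans (nneseries_lim_ge 1 _).
  by rewrite big_nat1.
by move=> n _ _; rewrite lee_fin /=; exact: sqrtr_ge0.
Qed.

Local Close Scope ereal_scope.

Lemma int_ident (R : realType) (mu : {finite_measure set R -> \bar R}) (m : R) : (1 <= m)%R ->
  (Rintegral mu I01 (fun x => x `^ m) - expR (- m) * Rintegral mu I01 (fun x => expR (m * x))
   = - Rintegral mu I01 (fun x => expR (m * (x - 1)) - x `^ m))%R.
Proof.
move=> m1.
have mI : measurable (I01 : set R) by exact: measurable_itv.
have mp : measurable_fun I01 (fun x : R => x `^ m).
  exact: measurable_funS (measurable_powR m).
have me : measurable_fun I01 (fun x : R => expR (m * x)).
  by apply: measurableT_comp => //; apply: measurable_funM.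
have ip : mu.-integrable I01 (EFin \o (fun x : R => x `^ m)).
  apply: (@int_bnd R mu _ 1) => // x Ix.
  move: (Ix); rewrite /I01 /= in_itv /= => Ix'.
  have /andP[g0 _] := @g_bounds R m x m1 Ix'.
  rewrite ger0_norm; last exact: powR_ge0.
  have : (expR (m * (x - 1)) <= 1)%R.
    by rewrite expR_le1; apply: mulr_ge0_le0; [lra|move: Ix' => /andP[_ ?]; lra].
  lra.
have ie : mu.-integrable I01 (EFin \o (fun x : R => expR (m * x))).
  apply: (@int_bnd R mu _ (expR m)) => // x Ix.
  move: (Ix); rewrite /I01 /= in_itv /= => /andP[x0 x1].
  rewrite ger0_norm; last exact: expR_ge0.
  by rewrite ler_expR; rewrite -[X in (_ <= X)%R]mulr1; apply: ler_wpM2l; lra.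
have ie' : mu.-integrable I01 (EFin \o (fun x : R => expR (- m) * expR (m * x))%R).
  apply: (@int_bnd R mu _ (expR (- m) * expR m)) => //.
    by apply: measurable_funM.
  move=> x Ix.
  move: (Ix); rewrite /I01 /= in_itv /= => /andP[x0 x1].
  rewrite ger0_norm; last by apply: mulr_ge0; exact: expR_ge0.
  apply: ler_wpM2l; first exact: expR_ge0.
  by rewrite ler_expR; rewrite -[X in (_ <= X)%R]mulr1; apply: ler_wpM2l; lra.
rewrite [in RHS](@eq_Rintegral _ _ _ mu _ (fun x => expR (- m) * expR (m * x) - x `^ m)%R); last first.
  by move=> x _; rewrite /= -expRD; congr (expR _ - _)%R; ring.
rewrite RintegralB // RintegralZl //.
by rewrite opprB.
Qed.

Theorem proposition1 (R : realType)
  (mu1 mu2 mu3 mu4 : {finite_measure set R -> \bar R}) (sigma : R)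
  (hsigma : 0 <= sigma)
  (Hholder : exists K : R, forall x : R, 0 <= x < 1 ->
      (cm_variation mu1 mu2 mu3 mu4 `[x, 1%R[ <= (K * (1 - x) `^ sigma)%:E)%E) :
  exists C M : R, forall m : R, M <= m ->
    ComplexField.Normc.normc
      (cm_integral mu1 mu2 mu3 mu4 (fun x => x `^ m)
       - (expR (- m))%:C%C * cm_integral mu1 mu2 mu3 mu4 (fun x => expR (m * x)))
    <= C / m `^ (1 + sigma).
Proof.
case: Hholder => K HK.
exists (2 * CA sigma K), 1 => m m1.
have sub01 : forall x (B : set R), 0 <= x -> B `<=` `[x, 1%R[%classic -> B `&` I01 = B.
  move=> x B x0 BA; apply/setIidl => y /BA; rewrite /I01 /= !in_itv /= => /andP[xy ->].
  by rewrite andbT (le_trans x0 xy).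
have H12 : forall x : R, 0 <= x < 1 -> forall B : set R, measurable B ->
      B `<=` `[x, 1%R[%classic ->
      `|fine (mu1 B) - fine (mu2 B)| <= K * (1 - x) `^ sigma.
  move=> x Ix B mB BA.
  have h1 := @var_ge R mu1 mu2 mu3 mu4 x B mB BA.
  have h2 := HK x Ix.
  have h3 := le_trans h1 h2; rewrite lee_fin in h3.
  apply: le_trans h3; rewrite /cmeas (sub01 x B) //; last by case/andP: Ix.
  exact: re_le_normc.
have H34 : forall x : R, 0 <= x < 1 -> forall B : set R, measurable B ->
      B `<=` `[x, 1%R[%classic ->
      `|fine (mu3 B) - fine (mu4 B)| <= K * (1 - x) `^ sigma.
  move=> x Ix B mB BA.
  have h1 := @var_ge R mu1 mu2 mu3 mu4 x B mB BA.
  have h2 := HK x Ix.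
  have h3 := le_trans h1 h2; rewrite lee_fin in h3.
  apply: le_trans h3; rewrite /cmeas (sub01 x B) //; last by case/andP: Ix.
  exact: im_le_normc.
have nuE12 : forall A, measurable A ->
   (cadd (charge_of_finite_measure mu1) (cscale (-1) (charge_of_finite_measure mu2))) A
   = (mu1 A - mu2 A)%E.
  by move=> A _; rewrite /cadd /= /cscale /= mulN1e.
have nuE34 : forall A, measurable A ->
   (cadd (charge_of_finite_measure mu3) (cscale (-1) (charge_of_finite_measure mu4))) A
   = (mu3 A - mu4 A)%E.
  by move=> A _; rewrite /cadd /= /cscale /= mulN1e.
have b12 := @lemB0 R mu1 mu2
  (cadd (charge_of_finite_measure mu1) (cscale (-1) (charge_of_finite_measure mu2)))
  sigma K m nuE12 hsigma m1 H12.
have b34 := @lemB0 R mu3 mu4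
  (cadd (charge_of_finite_measure mu3) (cscale (-1) (charge_of_finite_measure mu4)))
  sigma K m nuE34 hsigma m1 H34.
rewrite /cm_integral.
set e := expR (- m).
have -> : forall a1 a2 a3 a4 e1 e2 e3 e4 : R,
  (Complex (a1 - a2) (a3 - a4) - e%:C * Complex (e1 - e2) (e3 - e4) =
   Complex ((a1 - e * e1) - (a2 - e * e2)) ((a3 - e * e3) - (a4 - e * e4)))%C.
  by move=> *; congr Complex; simpl; ring.
rewrite /e !int_ident //.
apply: (le_trans (@normc_le R _ _)).
have nE : forall u v : R, `|- u - - v| = `|u - v| by move=> u v; rewrite -opprD normrN.
rewrite !nE.
have -> : 2 * CA sigma K / m `^ (1 + sigma) =
  CA sigma K / m `^ (1 + sigma) + CA sigma K / m `^ (1 + sigma) by ring.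
exact: lerD.
Qed.
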